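(* Let $\mathbf p$ be a non-degenerate configuration of $n$ points in $\mathbb R^d$ (not necessarily pinned) with affine span of dimension $\ell$, and let $\mathbf p(t)$ be an analytic trajectory with $\mathbf p(0)=\mathbf p$. Then there exist $\varepsilon>0$ and an analytic trajectory of isometries $T(t)$, $t\in[0,\varepsilon)$, such that $\mathbf q(t):=T(t)\mathbf p(t)$ is in $\ell$-pinned position for all $t\in[0,\varepsilon)$.
   Context: A configuration $\mathbf q=(\mathbf q_1,\dots,\mathbf q_n)$, $\mathbf q_i\in\mathbb R^d$, is in $\ell$-pinned position if $\mathbf q_1=0$ and, for $2\le i\le\ell+1$, $\mathbf q_i$ lies in the span of $e_1,\dots,e_{i-1}$. A configuration $\mathbf p$ with $\ell$-dimensional affine span is non-degenerate if $\mathbf p_1,\dots,\mathbf p_{\ell+1}$ are affinely independent. An analytic trajectory of isometries is a family $T(t)\mathbf x=A(t)\mathbf x+\mathbf b(t)$ of isometries of $\mathbb R^d$ with $A(t)$ orthogonal and $A(t),\mathbf b(t)$ analytic in $t$; it acts on configurations pointwise. *)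

(* Defs.v *)
From HB Require Import structures.
From mathcomp Require Import all_boot all_order all_algebra.
From mathcomp Require Import all_classical all_reals all_analysis.
Set Implicit Arguments. Unset Strict Implicit. Unset Printing Implicit Defensive.
Import Order.TTheory GRing.Theory Num.Theory.
Import numFieldNormedType.Exports.
Local Open Scope classical_set_scope.
Local Open Scope ring_scope.

(* A configuration of n points in R^d: point i is the row vector p i.
   Indices are 0-based: the paper's p_1, ..., p_n are p 0, ..., p (n-1). *)
Definition config (R : realType) (n d : nat) := 'I_n -> 'rV[R]_d.

Definition pt (R : realType) n d (p : config R n d) (k : nat) : 'rV[R]_d :=
  if insub k is Some i then p i else 0.

Definition affine_dim (R : realType) n d (p : config R n d) : nat :=
  \rank (\matrix_(i < n) (p i - pt p 0)).

Definition first_aff_indep (R : realType) n d (p : config R n d) (m : nat) : Prop :=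
  (m < n)%N /\ \rank (\matrix_(i < m) (pt p i.+1 - pt p 0)) = m.

Definition nondegenerate_config (R : realType) n d (p : config R n d) : Prop :=
  first_aff_indep p (affine_dim p).

(* l-pinned position (0-based): q_0 = 0 and, for 1 <= i <= l, q_i lies in
   span(e_0, ..., e_(i-1)), i.e. coordinates j >= i of q_i vanish. *)
Definition pinned (R : realType) n d (l : nat) (q : config R n d) : Prop :=
  forall (i : 'I_n) (j : 'I_d), (i <= l)%N -> (i <= j)%N -> q i 0 j = 0.

Definition analytic_at (R : realType) (f : R -> R) (t0 : R) : Prop :=
  exists r : R, 0 < r /\ exists a : nat -> R,
    forall t, `|t - t0| < r ->
      series (fun k => a k * (t - t0) ^+ k) @ \oo --> f t.

Definition mx_analytic_on (R : realType) m k (M : R -> 'M[R]_(m, k))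
  (D : set R) : Prop :=
  forall t0, D t0 -> forall i j, analytic_at (fun t => M t i j) t0.

Definition traj_analytic_on (R : realType) n d (p : R -> config R n d)
  (D : set R) : Prop :=
  forall i : 'I_n, mx_analytic_on (fun t => p t i) D.

Definition orthogonal_mx (R : realType) d (A : 'M[R]_d) : Prop :=
  A^T *m A = 1%:M.

(* the isometry x |-> A x + b acting on row vectors, pointwise on configurations *)
Definition act_iso (R : realType) n d (A : 'M[R]_d) (b : 'rV[R]_d)
  (p : config R n d) : config R n d :=
  fun i => p i *m A^T + b.

(* Main.v *)
Require Import Defs.
From HB Require Import structures.
From mathcomp Require Import all_boot all_order all_algebra.
From mathcomp Require Import all_classical all_reals all_analysis.
From mathcomp.algebra_tactics Require Import ring lra.
Import Order.TTheory GRing.Theory Num.Theory.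
Import numFieldNormedType.Exports.
Local Open Scope classical_set_scope.
Local Open Scope ring_scope.



Section SRec.
Context {V : Type}.
Variable v0 : V.
Variable step : nat -> (nat -> V) -> V.
Fixpoint srl (N : nat) : seq V :=
  match N with
  | 0 => [:: step 0 (fun _ => v0)]
  | N'.+1 => let l := srl N' in rcons l (step N'.+1 (fun i => nth v0 l i))
  end.
Definition srec N := nth v0 (srl N) N.

Lemma size_srl N : size (srl N) = N.+1.
Proof. by elim: N => //= N IH; rewrite size_rcons IH. Qed.

Lemma srl_prefix N M i : (i <= N)%N -> (N <= M)%N -> nth v0 (srl M) i = nth v0 (srl N) i.
Proof.
move=> iN; elim: M => [|M IH]; first by rewrite leqn0 => /eqP->.
rewrite leq_eqVlt => /orP[/eqP->//|]; rewrite ltnS => NM.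
by rewrite -(IH NM) /= nth_rcons size_srl ltnS (leq_trans iN NM).
Qed.

Lemma srecE (Hs : forall N g g', (forall i, (i < N)%N -> g i = g' i) -> step N g = step N g')
  N : srec N = step N srec.
Proof.
case: N => [|N]; first by apply: Hs.
rewrite /srec /= nth_rcons size_srl ltnn eqxx; apply: Hs => i iN.
by rewrite /srec (@srl_prefix i N i).
Qed.
End SRec.

Section PS.
Context {R : realType}.
Implicit Types (a b : nat -> R) (f g : R -> R).

Lemma geo_le (x : R) N : 0 <= x < 1 -> \sum_(k < N) x ^+ k <= (1 - x)^-1.
Proof.
move=> /andP[x0 x1].
have := geometric_seriesE 1 (negbT (lt_eqF x1)).
move/(congr1 (fun f : nat -> R => f N)); rewrite /series /= big_mkord.
rewrite /geometric /=; under eq_bigr do rewrite mul1r.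
move=> ->; rewrite mul1r ler_pdivrMr ?subr_gt0 // mulVf ?subr_eq0 ?(gt_eqF x1) //.
by rewrite gerBl exprn_ge0.
Qed.

Lemma lim_le_bound (u : nat -> R) (l c B : R) :
  series u @ \oo --> l -> (forall n, (0 < n)%N -> `|series u n - c| <= B) ->
  `|l - c| <= B.
Proof.
move=> ul H.
have h : (fun n => `|series u n - c|) @ \oo --> `|l - c|.
  by apply: cvg_norm; apply: cvgB => //; exact: cvg_cst.
rewrite -(cvg_lim _ h) //; apply: limr_le; first by apply/cvg_ex; eexists; exact: h.
near=> n; apply: H; near: n; exact: nbhs_infty_gt.
Unshelve. all: by end_near. Qed.


Definition an f t0 := exists a : nat -> R, exists C K r : R,
  [/\ 0 < K, 0 < r, r * K < 1, (forall k, `|a k| <= C * K ^+ k) &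
   forall t, `|t - t0| < r -> series (fun k => a k * (t - t0) ^+ k) @ \oo --> f t].

Lemma abs_cvg a (C K s : R) : (forall k, `|a k| <= C * K ^+ k) -> 0 <= K ->
  `|s| * K < 1 -> cvgn (series (fun k => a k * s ^+ k)).
Proof.
move=> aC K0 sK; apply: normed_cvg.
have C0 : 0 <= C by have := aC 0%N; rewrite expr0 mulr1; apply: le_trans.
apply: (@series_le_cvg _ _ (geometric C (`|s| * K))).
- by move=> n /=; rewrite normr_ge0.
- by move=> n; apply: geometric_ge0 => //; rewrite mulr_ge0.
- move=> n; rewrite /geometric /= normrM normrX exprMn [_ ^+ n * _]mulrC mulrA.
  by apply: ler_wpM2r; [rewrite exprn_ge0|].
- by apply: is_cvg_geometric_series; rewrite ger0_norm ?mulr_ge0.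
Qed.

Lemma bounded_seq (u : nat -> R) : cvgn (series u) ->
  exists M : R, 0 <= M /\ forall k, `|u k| <= M.
Proof.
move/cvg_series_bounded => [M0 [_ HM]].
exists (`|M0| + 1); split; first by rewrite addr_ge0.
move=> k; apply: (HM (`|M0| + 1)) => //.
by rewrite (le_lt_trans (ler_norm _)) // ltrDl.
Qed.

Lemma tail_bound a (C K s l : R) : (forall k, `|a k| <= C * K ^+ k) -> 0 <= K ->
  `|s| * K < 1 -> series (fun k => a k * s ^+ k) @ \oo --> l ->
  `|l - a 0%N| <= C * (`|s| * K) * (1 - `|s| * K)^-1.
Proof.
move=> aC K0 sK hl; have := @lim_le_bound _ _ (a 0%N) (C * (`|s| * K) * (1 - `|s| * K)^-1) hl; apply => -[//|m] _.
have C0 : 0 <= C by have := aC 0%N; rewrite expr0 mulr1; apply: le_trans.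
rewrite seriesEord /= big_ord_recl /= expr0 mulr1 [a 0%N + _]addrC addrK.
apply: (le_trans (ler_norm_sum _ _ _)).
apply: (@le_trans _ _ (\sum_(i < m) C * (`|s| * K) * (`|s| * K) ^+ i)).
  apply: ler_sum => i _; rewrite normrM normrX -mulrA -exprS exprMn.
  rewrite [_ ^+ _ * _]mulrC mulrA; apply: ler_wpM2r; first by rewrite exprn_ge0.
  exact: aC.
rewrite -mulr_sumr; apply: ler_wpM2l; first by rewrite mulr_ge0 // mulr_ge0.
by apply: geo_le; rewrite sK mulr_ge0.
Qed.

Lemma an_val f t0 a (C K r : R) : 0 < K -> 0 < r -> (forall k, `|a k| <= C * K ^+ k) ->
  (forall t, `|t - t0| < r -> series (fun k => a k * (t - t0) ^+ k) @ \oo --> f t) ->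
  f t0 = a 0%N.
Proof.
move=> K0 r0 aC H.
have := @tail_bound a C K 0 (f t0) aC (ltW K0); rewrite normr0 !mul0r mulr0 mul0r.
move=> /(_ ltr01); rewrite -{1}(subrr t0) => /(_ (H t0 _)).
by rewrite subrr normr0 => /(_ r0); rewrite normr_le0 subr_eq0 => /eqP.
Qed.

Lemma an_analytic f t0 : an f t0 -> analytic_at f t0.
Proof.
by move=> [a [C [K [r [K0 r0 rK aC H]]]]]; exists r; split => //; exists a.
Qed.

Lemma analytic_an f t0 : analytic_at f t0 -> an f t0.
Proof.
move=> [r [r0 [a H]]].
have r2 : 0 < r / 2 by rewrite divr_gt0.
have := H (t0 + r / 2); rewrite addrAC subrr add0r ger0_norm ?(ltW r2) //.
rewrite ltr_pdivrMr // ltr_pMr // ltr1n => /(_ isT) hc.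
have [M [M0 HM]] := bounded_seq _ (cvgP _ hc : cvgn (series (fun k => a k * (r / 2) ^+ k))).
exists a, M, (r / 2)^-1, (r / 4); split.
- by rewrite invr_gt0.
- by rewrite divr_gt0.
- have -> : r / 4 * (r / 2)^-1 = 1 / 2 by field; rewrite gt_eqF.
  lra.
- move=> k; have := HM k; rewrite normrM normrX (ger0_norm (ltW r2)).
  by rewrite -ler_pdivlMr ?exprn_gt0 // exprVn.
- move=> t ht; apply: H; apply: (lt_trans ht).
  by rewrite ltr_pdivrMr // ltr_pMr // ltr1n.
Qed.

Definition conv a b (N : nat) := \sum_(i < N.+1) a i * b (N - i)%N.

Lemma conv_bound a b (C D K : R) N : 0 <= K ->
  (forall k, `|a k| <= C * K ^+ k) -> (forall k, `|b k| <= D * K ^+ k) ->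
  `|conv a b N| <= C * D * (2 * K) ^+ N.
Proof.
move=> K0 aC bD.
have C0 : 0 <= C by have := aC 0%N; rewrite expr0 mulr1; apply: le_trans.
have D0 : 0 <= D by have := bD 0%N; rewrite expr0 mulr1; apply: le_trans.
apply: (le_trans (ler_norm_sum _ _ _)).
apply: (@le_trans _ _ (\sum_(i < N.+1) C * D * K ^+ N)).
  apply: ler_sum => i _; rewrite normrM.
  have -> : C * D * K ^+ N = (C * K ^+ i) * (D * K ^+ (N - i)).
    by rewrite mulrACA -exprD subnKC // -ltnS.
  apply: ler_pM; [exact: normr_ge0|exact: normr_ge0|exact: aC|exact: bD].
rewrite sumr_const card_ord -[_ *+ N.+1]mulr_natr exprMn -!mulrA.
apply: ler_wpM2l => //; apply: ler_wpM2l => //.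
rewrite mulrC; apply: ler_wpM2r; first by rewrite exprn_ge0.
by rewrite -natrX ler_nat; apply: ltn_expl.
Qed.

Lemma cauchy a b (C D K s x y : R) : 0 <= K ->
  (forall k, `|a k| <= C * K ^+ k) -> (forall k, `|b k| <= D * K ^+ k) ->
  `|s| * (2 * K) < 1 ->
  series (fun k => a k * s ^+ k) @ \oo --> x ->
  series (fun k => b k * s ^+ k) @ \oo --> y ->
  series (fun k => conv a b k * s ^+ k) @ \oo --> x * y.
Proof.
move=> K0 aC bD sK ha hb.
have C0 : 0 <= C by have := aC 0%N; rewrite expr0 mulr1; apply: le_trans.
have D0 : 0 <= D by have := bD 0%N; rewrite expr0 mulr1; apply: le_trans.
pose PA M : {poly R} := \poly_(i < M) (a i * s ^+ i).
pose PB M : {poly R} := \poly_(i < M) (b i * s ^+ i).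
pose Dm M := (PA M * PB M).[1] - series (fun k => conv a b k * s ^+ k) M.
pose th := `|s| * (2 * K).
have th0 : 0 <= th by rewrite mulr_ge0 // mulr_ge0.
have hA M : series (fun k => a k * s ^+ k) M = (PA M).[1].
  by rewrite horner_poly seriesEord /=; under [RHS]eq_bigr do rewrite expr1n mulr1.
have hB M : series (fun k => b k * s ^+ k) M = (PB M).[1].
  by rewrite horner_poly seriesEord /=; under [RHS]eq_bigr do rewrite expr1n mulr1.
have cA M k : `|(PA M)`_k| <= C * (K * `|s|) ^+ k.
  rewrite coef_poly; case: ifP => _; last by rewrite normr0 mulr_ge0 // exprn_ge0 ?mulr_ge0.
  rewrite normrM normrX exprMn mulrA; apply: ler_wpM2r; first by rewrite exprn_ge0.
  exact: aC.
have cB M k : `|(PB M)`_k| <= D * (K * `|s|) ^+ k.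
  rewrite coef_poly; case: ifP => _; last by rewrite normr0 mulr_ge0 // exprn_ge0 ?mulr_ge0.
  rewrite normrM normrX exprMn mulrA; apply: ler_wpM2r; first by rewrite exprn_ge0.
  exact: bD.
have DmE M : Dm M = \sum_(M <= N < M + M) (PA M * PB M)`_N.
  rewrite /Dm (@horner_coef_wide _ (M + M)); last first.
    apply: (leq_trans (size_polyMleq _ _)); rewrite -subn1 leq_subLR.
    by rewrite (leq_trans (leq_add (size_poly _ _) (size_poly _ _))) // leq_addl.
  under eq_bigr do rewrite expr1n mulr1.
  rewrite -(big_mkord xpredT (fun N => (PA M * PB M)`_N)) (big_cat_nat _ (leq_addr M M)) //=.
  rewrite seriesEnat /= addrAC -[RHS]add0r; congr (_ + _); apply/eqP; rewrite subr_eq0; apply/eqP.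
  apply: eq_big_nat => N /andP[_ NM]; rewrite coefM /conv mulr_suml.
  apply: eq_bigr => i _; rewrite !coef_poly.
  have iN : (i <= N)%N by rewrite -ltnS.
  rewrite (leq_ltn_trans iN NM) (leq_ltn_trans (leq_subr i N) NM).
  by rewrite mulrACA -exprD subnKC.
have Dmb M : `|Dm M| <= C * D * (1 - th)^-1 * th ^+ M.
  rewrite DmE; apply: (le_trans (ler_norm_sum _ _ _)).
  apply: (@le_trans _ _ (\sum_(M <= N < M + M) C * D * th ^+ N)).
    apply: ler_sum => N _; rewrite coefM.
    have := @conv_bound (fun k => (PA M)`_k) (fun k => (PB M)`_k) C D (K * `|s|) N.
    rewrite /conv /th [`|s| * _]mulrC -mulrA.
    by move/(_ (mulr_ge0 K0 (normr_ge0 _)) (cA M) (cB M)); rewrite !mulrA.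
  rewrite (big_addn 0 _ M) addnK big_mkord -mulr_sumr -mulrA.
  rewrite -!mulrA; apply: ler_wpM2l => //; apply: ler_wpM2l => //.
  under eq_bigr do rewrite exprD; rewrite -mulr_suml; apply: ler_wpM2r.
    by rewrite exprn_ge0.
  by apply: geo_le; rewrite th0.
have Dm0 : Dm @ \oo --> 0.
  have E : (fun M => C * D * (1 - th)^-1 * th ^+ M) @ \oo --> 0.
    rewrite -(mulr0 (C * D * (1 - th)^-1)); apply: cvgMr; apply: cvg_expr.
    by rewrite ger0_norm.
  apply: (@squeeze_cvgr _ _ _ _ (fun M => - (C * D * (1 - th)^-1 * th ^+ M))
     (fun M => C * D * (1 - th)^-1 * th ^+ M)); last exact: E.
    by near=> M; rewrite -ler_norml; apply: Dmb.
  by rewrite -oppr0; apply: cvgN.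
have -> : series (fun k => conv a b k * s ^+ k) =
    (fun M => series (fun k => a k * s ^+ k) M * series (fun k => b k * s ^+ k) M - Dm M).
  by apply: funext => M; rewrite hA hB -hornerM /Dm opprB addrC subrK.
rewrite -[x * y]subr0; apply: cvgB => //; exact: cvgM.
Unshelve. all: by end_near. Qed.

Lemma powle (x y : R) n : 0 <= x -> x <= y -> x ^+ n <= y ^+ n.
Proof.
move=> x0 xy; apply: lerXn2r => //; rewrite nnegrE //; exact: le_trans xy.
Qed.

Lemma anI f t0 a (C K r : R) : 0 <= K -> 0 < r -> (forall k, `|a k| <= C * K ^+ k) ->
  (forall t, `|t - t0| < r -> series (fun k => a k * (t - t0) ^+ k) @ \oo --> f t) ->
  an f t0.
Proof.
move=> K0 r0 aC H.
have C0 : 0 <= C by have := aC 0%N; rewrite expr0 mulr1; apply: le_trans.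
have K1 : 0 < K + 1 by rewrite ltr_wpDl.
have r1 : 0 < (2 * (K + 1))^-1 by rewrite invr_gt0 mulr_gt0.
exists a, C, (K + 1), (Order.min r (2 * (K + 1))^-1); split => //.
- by rewrite lt_min r0.
- apply: (@le_lt_trans _ _ ((2 * (K + 1))^-1 * (K + 1))).
    by rewrite ler_wpM2r ?(ltW K1) // ge_min lexx orbT.
  rewrite invfM -mulrA mulVf ?gt_eqF // mulr1; lra.
- move=> k; apply: (le_trans (aC k)); apply: ler_wpM2l => //.
  by apply: powle => //; rewrite lerDl.
- by move=> t; rewrite lt_min => /andP[/H].
Qed.

Lemma an_cst (c t0 : R) : an (fun _ => c) t0.
Proof.
apply: (@anI _ _ (fun k => if k == 0%N then c else 0) `|c| 1 1) => //.
  by move=> [|k]; rewrite /= ?expr1n ?mulr1 // normr0.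
move=> t _; apply: cvg_near_cst; near=> M.
have : (0 < M)%N by near: M; exact: nbhs_infty_gt.
move=> M0; rewrite seriesEord /= -(prednK M0) big_ord_recl /= expr0 mulr1 big1 ?addr0 //.
by move=> i _; rewrite mul0r.
Unshelve. all: by end_near. Qed.

Lemma an_add f g t0 : an f t0 -> an g t0 -> an (fun t => f t + g t) t0.
Proof.
move=> [a [C [K [r [K0 r0 rK aC Ha]]]]] [b [D [L [r' [L0 r0' rL bD Hb]]]]].
have C0 : 0 <= C by have := aC 0%N; rewrite expr0 mulr1; apply: le_trans.
have D0 : 0 <= D by have := bD 0%N; rewrite expr0 mulr1; apply: le_trans.
apply: (@anI _ _ (fun k => a k + b k) (C + D) (K + L) (Order.min r r')).
- by rewrite addr_ge0 ?ltW.
- by rewrite lt_min r0 r0'.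
- move=> k; rewrite mulrDl; apply: (le_trans (ler_normD _ _)); apply: lerD.
    apply: (le_trans (aC k)); apply: ler_wpM2l => //; apply: powle; first exact: ltW.
    by rewrite lerDl ltW.
  apply: (le_trans (bD k)); apply: ler_wpM2l => //; apply: powle; first exact: ltW.
  by rewrite lerDr ltW.
- move=> t; rewrite lt_min => /andP[h1 h2].
  have -> : (fun k => (a k + b k) * (t - t0) ^+ k) =
      (fun k => a k * (t - t0) ^+ k) + (fun k => b k * (t - t0) ^+ k).
    by apply: funext => k; rewrite /= mulrDl.
  by rewrite seriesD; apply: cvgD; [apply: Ha | apply: Hb].
Qed.

Lemma an_mul f g t0 : an f t0 -> an g t0 -> an (fun t => f t * g t) t0.
Proof.
move=> [a [C [K [r [K0 r0 rK aC Ha]]]]] [b [D [L [r' [L0 r0' rL bD Hb]]]]].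
have C0 : 0 <= C by have := aC 0%N; rewrite expr0 mulr1; apply: le_trans.
have D0 : 0 <= D by have := bD 0%N; rewrite expr0 mulr1; apply: le_trans.
have KL : 0 <= K + L by rewrite addr_ge0 ?ltW.
have aCp k : `|a k| <= C * (K + L) ^+ k.
  apply: (le_trans (aC k)); apply: ler_wpM2l => //; apply: powle; first exact: ltW.
  by rewrite lerDl ltW.
have bDp k : `|b k| <= D * (K + L) ^+ k.
  apply: (le_trans (bD k)); apply: ler_wpM2l => //; apply: powle; first exact: ltW.
  by rewrite lerDr ltW.
have r3 : 0 < (2 * (K + L) + 1)^-1 by rewrite invr_gt0 ltr_wpDl // mulr_ge0.
apply: (@anI _ _ (conv a b) (C * D) (2 * (K + L))
   (Order.min r (Order.min r' (2 * (K + L) + 1)^-1))).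
- by rewrite mulr_ge0.
- by rewrite !lt_min r0 r0' r3.
- by move=> k; apply: conv_bound.
- move=> t; rewrite !lt_min => /andP[h1 /andP[h2 h3]].
  apply: (@cauchy a b C D (K + L) (t - t0) (f t) (g t) KL aCp bDp _ (Ha _ h1) (Hb _ h2)).
  apply: (@le_lt_trans _ _ ((2 * (K + L) + 1)^-1 * (2 * (K + L)))).
    by rewrite ler_wpM2r ?mulr_ge0 // ltW.
  rewrite ltr_pdivrMl ?ltr_wpDl ?mulr_ge0 // mulr1; lra.
Qed.

Lemma an_sum (I : Type) (s : seq I) (P : pred I) (F : I -> R -> R) t0 :
  (forall i, an (F i) t0) -> an (fun t => \sum_(i <- s | P i) F i t) t0.
Proof.
move=> H; elim: s => [|i s IH].
  by under eq_fun do rewrite big_nil; apply: an_cst.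
under eq_fun do rewrite big_cons.
case: (P i); last by [].
exact: an_add.
Qed.

Lemma series_delta (u : nat -> R) (s : R) : u 0%N = 1 -> (forall k, u k.+1 = 0) ->
  series (fun k => u k * s ^+ k) @ \oo --> (1 : R).
Proof.
move=> u0 uS; apply: cvg_near_cst; near=> M.
have : (0 < M)%N by near: M; exact: nbhs_infty_gt.
move=> M0; rewrite seriesEord /= -(prednK M0) big_ord_recl /= expr0 mulr1 u0 big1 ?addr0 //.
by move=> i _; rewrite /bump /= add1n uS mul0r.
Unshelve. all: by end_near. Qed.

Lemma an_inv f t0 : an f t0 -> f t0 != 0 -> an (fun t => (f t)^-1) t0.
Proof.
move=> [a [C [K [r [K0 r0 rK aC Ha]]]]] f0.
have a0E : f t0 = a 0%N := @an_val f t0 a C K r K0 r0 aC Ha.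
have C0 : 0 <= C by have := aC 0%N; rewrite expr0 mulr1; apply: le_trans.
rewrite a0E in f0.
set a0 := a 0%N in f0 a0E.
pose stp := fun N (z : nat -> R) => if N == 0%N then a0^-1
   else - a0^-1 * \sum_(k < N) a k.+1 * z (N - k.+1)%N.
pose z := srec (0 : R) stp.
have zE N : z N = stp N z.
  apply: srecE => M g g' H; rewrite /stp; case: eqP => // /eqP M0.
  congr (_ * _); apply: eq_bigr => k _; by rewrite H // ltn_subrL /= lt0n.
have convE N : conv a z N = (N == 0%N)%:R.
  rewrite /conv big_ord_recl /= subn0; case: N => [|N].
    by rewrite big_ord0 addr0 zE /stp /= mulfV.
  rewrite zE /stp /= mulrA mulrN mulfV // mulN1r.
  under [X in _ + X]eq_bigr do rewrite /bump /= add1n.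
  by rewrite addNr.
pose c := C * `|a0|^-1.
have c0 : 0 <= c by rewrite mulr_ge0 // invr_ge0.
pose L := 2 * K * (1 + c).
pose x := (2 * (1 + c))^-1.
have L0 : 0 < L by rewrite mulr_gt0 ?mulr_gt0 // ltr_wpDr.
have x0 : 0 <= x by rewrite invr_ge0 mulr_ge0 // addr_ge0.
have x1 : x < 1 by rewrite invf_lt1 ?mulr_gt0 ?ltr_wpDr //; lra.
have xE : K = x * L by rewrite /x /L; field; lra.
have zb N : `|z N| <= `|a0|^-1 * L ^+ N.
  elim/ltn_ind: N => N IH; rewrite zE /stp; case: eqP => [->|/eqP N0].
    by rewrite expr0 mulr1 normfV.
  rewrite normrM normrN normfV; apply: ler_wpM2l; first by rewrite invr_ge0.
  apply: (le_trans (ler_norm_sum _ _ _)).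
  apply: (@le_trans _ _ (\sum_(k < N) c * L ^+ N * x ^+ k.+1)).
    apply: ler_sum => k _; rewrite normrM.
    have kN : (k.+1 <= N)%N by [].
    have := IH (N - k.+1)%N; rewrite ltn_subrL /= lt0n N0 => /(_ isT) hz.
    apply: (le_trans (ler_pM (normr_ge0 _) (normr_ge0 _) (aC k.+1) hz)).
    have LN : L ^+ N = L ^+ k.+1 * L ^+ (N - k.+1) by rewrite -exprD subnKC.
    rewrite xE exprMn LN /c.
    rewrite le_eqVlt; apply/orP; left; apply/eqP; set A := x ^+ k.+1; set B := L ^+ k.+1; set B' := L ^+ (N - k.+1); ring.
  under eq_bigr do rewrite exprS mulrA.
  rewrite -mulr_sumr.
  have gs : \sum_(i < N) x ^+ i <= (1 - x)^-1 by apply: geo_le; rewrite x0 x1.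
  apply: (@le_trans _ _ (c * L ^+ N * x * (1 - x)^-1)).
    by apply: ler_wpM2l gs; rewrite ?mulr_ge0 ?exprn_ge0 // ltW.
  have hx : c * x / (1 - x) <= 1.
    have -> : c * x / (1 - x) = c / (1 + 2 * c).
      rewrite /x; field; apply/andP; split; rewrite ?mulf_neq0 ?gt_eqF //; lra.
    by rewrite ler_pdivrMr ?mul1r; lra.
  have -> : c * L ^+ N * x / (1 - x) = (c * x / (1 - x)) * L ^+ N by ring.
  rewrite -[X in _ <= X]mul1r; apply: ler_wpM2r hx.
  by rewrite exprn_ge0 // ltW.
have KL : 0 <= K + L by rewrite addr_ge0 ?ltW.
have aCp k : `|a k| <= C * (K + L) ^+ k.
  apply: (le_trans (aC k)); apply: ler_wpM2l => //; apply: powle; first exact: ltW.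
  by rewrite lerDl ltW.
have zbp k : `|z k| <= `|a0|^-1 * (K + L) ^+ k.
  apply: (le_trans (zb k)); apply: ler_wpM2l; first by rewrite invr_ge0.
  apply: powle; first exact: ltW.
  by rewrite lerDr ltW.
have r3 : 0 < (2 * (K + L) + 1)^-1 by rewrite invr_gt0 ltr_wpDl // mulr_ge0.
apply: (@anI (fun t => (f t)^-1) t0 z (`|a0|^-1) (K + L) (Order.min r (2 * (K + L) + 1)^-1)) => //.
  by rewrite lt_min r0 r3.
move=> t; rewrite lt_min => /andP[h1 h3].
have sK : `|t - t0| * (2 * (K + L)) < 1.
  apply: (@le_lt_trans _ _ ((2 * (K + L) + 1)^-1 * (2 * (K + L)))).
    by rewrite ler_wpM2r ?mulr_ge0 // ltW.
  rewrite ltr_pdivrMl ?ltr_wpDl ?mulr_ge0 // mulr1; lra.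
have sK1 : `|t - t0| * (K + L) < 1.
  apply: le_lt_trans sK; rewrite ler_wpM2l //; lra.
have [zl hz] : exists zl : R, series (fun k => z k * (t - t0) ^+ k) @ \oo --> zl.
  by have := @abs_cvg z _ (K + L) (t - t0) zbp KL sK1; move/cvg_ex => [zl hz]; exists zl.
have hp := @cauchy a z C (`|a0|^-1) (K + L) (t - t0) (f t) zl KL aCp zbp sK (Ha _ h1) hz.
have h1' : series (fun k => conv a z k * (t - t0) ^+ k) @ \oo --> (1 : R).
  by apply: series_delta => [|k]; rewrite convE.
have e : f t * zl = 1 by rewrite -(cvg_lim _ hp) // (cvg_lim _ h1').
have ft0 : f t != 0 by apply/eqP => ft0; move: e; rewrite ft0 mul0r => /eqP; rewrite eq_sym oner_eq0.
suff -> : (f t)^-1 = zl by [].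
by apply: (mulfI ft0); rewrite mulfV // e.
Qed.

Lemma conv_sum_le (g : nat -> R) M : (forall j, 0 <= g j) ->
  \sum_(N < M) conv g g N <= (\sum_(j < M) g j) ^+ 2.
Proof.
move=> g0.
pose P : {poly R} := \poly_(j < M) g j.
have cP j : 0 <= P`_j by rewrite coef_poly; case: ifP.
have cPP N : 0 <= (P * P)`_N by rewrite coefM sumr_ge0 // => i _; rewrite mulr_ge0.
have h1 : \sum_(j < M) g j = P.[1].
  by rewrite horner_poly; under [RHS]eq_bigr do rewrite expr1n mulr1.
have h2 : (P * P).[1] = \sum_(N < M + M) (P * P)`_N.
  rewrite (@horner_coef_wide _ (M + M)); first by under eq_bigr do rewrite expr1n mulr1.
  apply: (leq_trans (size_polyMleq _ _)); rewrite -subn1 leq_subLR.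
  by rewrite (leq_trans (leq_add (size_poly _ _) (size_poly _ _))) // leq_addl.
rewrite h1 expr2 -hornerM h2 big_split_ord /=.
rewrite -[X in X <= _]addr0; apply: lerD; last by apply: sumr_ge0 => i _.
apply: ler_sum => N _; rewrite coefM /conv; apply: ler_sum => i _; rewrite !coef_poly /=.
have iN : (i <= N)%N by rewrite -ltnS.
by rewrite (leq_ltn_trans iN (ltn_ord N)) (leq_ltn_trans (leq_subr i N) (ltn_ord N)).
Qed.

Lemma predsubS (N i : nat) : (i < N)%N -> (N.-1 - i).+1 = (N - i)%N.
Proof. by case: N => // N iN; rewrite /= subSn. Qed.

Lemma an_sqrt f t0 : an f t0 -> 0 < f t0 -> an (fun t => Num.sqrt (f t)) t0.
Proof.
move=> [a [C [K [r [K0 r0 rK aC Ha]]]]] f0.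
have a0E : f t0 = a 0%N := @an_val f t0 a C K r K0 r0 aC Ha.
have C0 : 0 <= C by have := aC 0%N; rewrite expr0 mulr1; apply: le_trans.
rewrite a0E in f0.
set a0 := a 0%N in f0 a0E.
set y0 := Num.sqrt a0.
have y00 : 0 < y0 by rewrite sqrtr_gt0.
have y0E : y0 ^+ 2 = a0 by rewrite sqr_sqrtr // ltW.
pose stp := fun N (y : nat -> R) => if N == 0%N then y0
   else (2 * y0)^-1 * (a N - \sum_(i < N.-1) y i.+1 * y (N - i.+1)%N).
pose y := srec (0 : R) stp.
have yE N : y N = stp N y.
  apply: srecE => M g g' H; rewrite /stp; case: eqP => // /eqP M0.
  congr (_ * (_ - _)); apply: eq_bigr => i _.
  rewrite H; last by rewrite -ltn_predRL.
  by rewrite H // ltn_subrL /= lt0n.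
have convE N : conv y y N = a N.
  case: N => [|M].
    by rewrite /conv big_ord_recl big_ord0 addr0 /= yE /= -expr2 y0E.
  rewrite /conv big_ord_recl /= big_ord_recr /= subnn.
  under eq_bigr do rewrite /bump /= add1n subSS.
  rewrite subn0 /bump /= add1n (yE M.+1) (yE 0%N) /stp /=.
  set S := \sum_(i < M) _.
  by field; rewrite gt_eqF.
pose c := C / a0.
have c0 : 0 <= c by rewrite divr_ge0 // ltW.
pose x := (2 * K * (1 + c))^-1.
have x0 : 0 < x by rewrite invr_gt0 mulr_gt0 ?mulr_gt0 // ltr_wpDr.
pose u := K * x.
have uE : u = (2 * (1 + c))^-1 by rewrite /u /x; field; apply/andP; split; rewrite gt_eqF //; lra.
have u0 : 0 <= u by rewrite mulr_ge0 // ltW.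
have u1 : u <= 2^-1 by rewrite uE lef_pV2 ?posrE; lra.
have Fa : C * u * (1 - u)^-1 <= a0.
  have -> : C * u * (1 - u)^-1 = C / (1 + 2 * c).
    rewrite uE; field; apply/andP; split; rewrite ?mulf_neq0 ?gt_eqF //; lra.
  rewrite ler_pdivrMr; last lra.
  have -> : a0 * (1 + 2 * c) = a0 + 2 * C by rewrite /c; field; rewrite gt_eqF.
  lra.
pose g j := `|y j.+1| * x ^+ j.+1.
have g0 j : 0 <= g j by rewrite mulr_ge0 // exprn_ge0 // ltW.
pose T M := \sum_(j < M) g j.
have T0 M : 0 <= T M by apply: sumr_ge0.
have stepN N : 2 * y0 * g N <= `|a N.+1| * x ^+ N.+1 + \sum_(i < N) g i * g (N.-1 - i)%N.
  rewrite /g (yE N.+1) /stp /= normrM normfV normrM (gtr0_norm y00) ger0_norm //.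
  rewrite mulrA mulrA mulfV ?mulf_neq0 ?gt_eqF // mul1r.
  apply: (@le_trans _ _ ((`|a N.+1| + \sum_(i < N) `|y i.+1| * `|y (N - i)%N|) * x ^+ N.+1)).
    apply: ler_wpM2r; first by rewrite exprn_ge0 // ltW.
    apply: (le_trans (ler_normB _ _)); apply: lerD => //.
    apply: (le_trans (ler_norm_sum _ _ _)); apply: ler_sum => i _.
    by rewrite subSS normrM.
  rewrite mulrDl lerD // mulr_suml; apply: ler_sum => i _.
  have iN : (i < N)%N by [].
  rewrite predsubS //.
  have -> : x ^+ N.+1 = x ^+ i.+1 * x ^+ (N - i)%N.
    by rewrite -exprD addSn subnKC // ltnW.
  by rewrite [X in X <= _]mulrACA.
have Tb M : T M <= y0.
  elim: M => [|M IH]; first by rewrite /T big_ord0 ltW.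
  have h1 : 2 * y0 * T M.+1 <= a0 + T M ^+ 2.
    rewrite /T mulr_sumr.
    apply: (@le_trans _ _ (\sum_(N < M.+1) (`|a N.+1| * x ^+ N.+1 +
        \sum_(i < N) g i * g (N.-1 - i)%N))).
      by apply: ler_sum => N _; apply: stepN.
    rewrite big_split /=; apply: lerD.
      apply: (@le_trans _ _ (\sum_(N < M.+1) C * u * u ^+ N)).
        apply: ler_sum => N _; rewrite -mulrA -exprS /u exprMn mulrA.
        by apply: ler_wpM2r; [rewrite exprn_ge0 // ltW | exact: aC].
      rewrite -mulr_sumr; apply: le_trans Fa; apply: ler_wpM2l; first by rewrite mulr_ge0.
      by apply: geo_le; rewrite u0 /=; lra.
    rewrite big_ord_recl big_ord0 add0r.
    apply: le_trans; last exact: (@conv_sum_le g M g0).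
    apply: ler_sum => i _.
    by rewrite /conv lift0 /=.
  have := T0 M; rewrite -y0E in h1; nra.
have yb k : `|y k| <= y0 * (x^-1) ^+ k.
  case: k => [|j]; first by rewrite yE /stp /= expr0 mulr1 ger0_norm // ltW.
  have gj : g j <= y0.
    apply: le_trans (Tb j.+1); rewrite /T big_ord_recr /= lerDr; exact: T0.
  by rewrite exprVn ler_pdivlMr ?exprn_gt0.
pose Kc := K + x^-1.
have Kc0 : 0 <= Kc by rewrite addr_ge0 ?ltW // invr_gt0.
have aCp k : `|a k| <= C * Kc ^+ k.
  apply: (le_trans (aC k)); apply: ler_wpM2l => //; apply: powle; first exact: ltW.
  by rewrite lerDl invr_ge0 ltW.
have ybp k : `|y k| <= y0 * Kc ^+ k.
  apply: (le_trans (yb k)); apply: ler_wpM2l; first exact: ltW.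
  apply: powle; first by rewrite invr_ge0 ltW.
  by rewrite lerDr ltW.
have r3 : 0 < (2 * Kc + 1)^-1 by rewrite invr_gt0 ltr_wpDl // mulr_ge0.
apply: (@anI (fun t => Num.sqrt (f t)) t0 y y0 Kc (Order.min r (2 * Kc + 1)^-1)) => //.
  by rewrite lt_min r0 r3.
move=> t; rewrite lt_min => /andP[h1 h3].
have sK : `|t - t0| * (2 * Kc) < 1.
  apply: (@le_lt_trans _ _ ((2 * Kc + 1)^-1 * (2 * Kc))).
    by rewrite ler_wpM2r ?mulr_ge0 // ltW.
  rewrite ltr_pdivrMl ?ltr_wpDl ?mulr_ge0 // mulr1; lra.
have sK1 : `|t - t0| * Kc < 1.
  apply: le_lt_trans sK; rewrite ler_wpM2l //; lra.
have [yl hy] : exists yl : R, series (fun k => y k * (t - t0) ^+ k) @ \oo --> yl.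
  by have := @abs_cvg y _ Kc (t - t0) ybp Kc0 sK1; move/cvg_ex => [yl hy]; exists yl.
have hp := @cauchy y y y0 y0 Kc (t - t0) yl yl Kc0 ybp ybp sK hy hy.
have ea : (fun k => conv y y k * (t - t0) ^+ k) = (fun k => a k * (t - t0) ^+ k).
  by apply: funext => k; rewrite convE.
rewrite ea in hp.
have e : f t = yl * yl by rewrite -(cvg_lim _ (Ha _ h1)) // (cvg_lim _ hp).
have th1 : `|t - t0| * x^-1 * 2 < 1.
  apply: le_lt_trans sK; rewrite -mulrA ler_wpM2l // mulrC ler_wpM2l //.
  by rewrite lerDr ltW.
have xi0 : 0 <= x^-1 by rewrite invr_ge0 ltW.
have th0 : 0 <= `|t - t0| * x^-1 by rewrite mulr_ge0.
have tb := @tail_bound y y0 (x^-1) (t - t0) yl yb xi0 _ hy.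
have y0' : y 0%N = y0 by rewrite yE.
rewrite y0' in tb.
have tb2 : y0 * (`|t - t0| * x^-1) * (1 - `|t - t0| * x^-1)^-1 < y0.
  rewrite -mulrA gtr_pMr // ltr_pdivrMr; last lra.
  lra.
have ylp : 0 < yl.
  have := le_lt_trans (tb ltac:(lra)) tb2; rewrite ltr_norml; lra.
suff -> : Num.sqrt (f t) = yl by [].
by rewrite e -expr2 sqrtr_sqr gtr0_norm.
Qed.

Lemma an_pos f t0 : an f t0 -> 0 < f t0 ->
  exists r : R, 0 < r /\ forall t, `|t - t0| < r -> 0 < f t.
Proof.
move=> [a [C [K [r [K0 r0 rK aC Ha]]]]] f0.
have a0E : f t0 = a 0%N := @an_val f t0 a C K r K0 r0 aC Ha.
have C0 : 0 <= C by have := aC 0%N; rewrite expr0 mulr1; apply: le_trans.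
rewrite a0E in f0.
set a0 := a 0%N in f0 a0E.
pose m := a0 / (2 * (C + a0) * K).
have m0 : 0 < m by rewrite divr_gt0 // mulr_gt0 // mulr_gt0 // ltr_wpDl.
exists (Order.min r m); split; first by rewrite lt_min r0 m0.
move=> t; rewrite lt_min => /andP[h1 h2].
set th := `|t - t0| * K.
have th0 : 0 <= th by rewrite mulr_ge0 // ltW.
have thm : th * (2 * (C + a0)) < a0.
  have hp : 0 < 2 * (C + a0) * K by rewrite mulr_gt0 // mulr_gt0 // ltr_wpDl.
  have h2' : `|t - t0| * (2 * (C + a0) * K) < a0 by rewrite -ltr_pdivlMr.
  have -> : th * (2 * (C + a0)) = `|t - t0| * (2 * (C + a0) * K) by rewrite /th; ring.
  exact: h2'.
have th1 : th < 1.
  have : th * (2 * (C + a0)) < (C + a0) * 1 by apply: (lt_le_trans thm); lra.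
  nra.
have tb := @tail_bound a C K (t - t0) (f t) aC (ltW K0) th1 (Ha _ h1).
have : C * th * (1 - th)^-1 < a0.
  rewrite ltr_pdivrMr; last lra.
  nra.
move=> h; rewrite -/a0 in tb; have := le_lt_trans tb h; rewrite ltr_norml => /andP[]; lra.
Qed.
End PS.

Arguments an_add {R f g t0}.
Arguments an_mul {R f g t0}.
Arguments an_inv {R f t0}.
Arguments an_sqrt {R f t0}.
Arguments an_pos {R f t0}.
Arguments an_analytic {R f t0}.
Arguments analytic_an {R f t0}.

Lemma an_opp (R : realType) (f : R -> R) t0 : an f t0 -> an (fun t => - f t) t0.
Proof.
move=> h; have := an_mul (an_cst (-1) t0) h.
by under eq_fun do rewrite mulN1r.
Qed.

Lemma an_sub (R : realType) (f g : R -> R) t0 : an f t0 -> an g t0 -> an (fun t => f t - g t) t0.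
Proof. by move=> hf hg; apply: an_add => //; apply: an_opp. Qed.


Section GS.
Context {R : realType} {d : nat}.
Implicit Types (u v x : 'rV[R]_d).

Definition dot u v : R := \sum_(m < d) u 0 m * v 0 m.

Lemma dotC u v : dot u v = dot v u.
Proof. by apply: eq_bigr => m _; rewrite mulrC. Qed.

Lemma dotDl u v x : dot (u + v) x = dot u x + dot v x.
Proof. by rewrite /dot -big_split; apply: eq_bigr => m _; rewrite mxE mulrDl. Qed.

Lemma dotNl u x : dot (- u) x = - dot u x.
Proof. by rewrite /dot -sumrN; apply: eq_bigr => m _; rewrite mxE mulNr. Qed.

Lemma dotBl u v x : dot (u - v) x = dot u x - dot v x.
Proof. by rewrite dotDl dotNl. Qed.

Lemma dotZl (a : R) u x : dot (a *: u) x = a * dot u x.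
Proof. by rewrite /dot mulr_sumr; apply: eq_bigr => m _; rewrite mxE mulrA. Qed.

Lemma dot_suml (I : Type) (s : seq I) (P : pred I) (F : I -> 'rV[R]_d) x :
  dot (\sum_(i <- s | P i) F i) x = \sum_(i <- s | P i) dot (F i) x.
Proof.
elim: s => [|i s IH]; first by rewrite !big_nil /dot big1 // => m _; rewrite mxE mul0r.
by rewrite !big_cons; case: (P i); rewrite ?dotDl IH.
Qed.

Lemma dot_ge0 u : 0 <= dot u u.
Proof. by apply: sumr_ge0 => m _; rewrite -expr2 sqr_ge0. Qed.

Lemma dot_eq0 u : dot u u = 0 -> u = 0.
Proof.
move=> h; apply/rowP => m; rewrite mxE.
have := @psumr_eq0P _ _ xpredT (fun m => u 0 m * u 0 m).
move=> /(_ (fun m _ => ltac:(rewrite -expr2 sqr_ge0; done))) /(_ h) /(_ m isT).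
by move/eqP; rewrite mulf_eq0 orbb => /eqP.
Qed.

Definition uu (w : nat -> 'rV[R]_d) (e : nat -> 'rV[R]_d) k :=
  w k - \sum_(j < k) dot (w k) (e j) *: e j.

Definition gs_step (w : nat -> 'rV[R]_d) k (e : nat -> 'rV[R]_d) :=
  (Num.sqrt (dot (uu w e k) (uu w e k)))^-1 *: uu w e k.

Definition gs w := srec (0 : 'rV[R]_d) (gs_step w).

Definition hh w k := dot (uu w (gs w) k) (uu w (gs w) k).

Lemma gsE w k : gs w k = (Num.sqrt (hh w k))^-1 *: uu w (gs w) k.
Proof.
rewrite /gs srecE //= => N g g' H.
rewrite /gs_step /uu; congr (_ *: _); last first.
  by congr (_ - _); apply: eq_bigr => j _; rewrite H.
by congr (_^-1); congr Num.sqrt; congr (dot _ _); congr (_ - _); apply: eq_bigr => j _; rewrite H.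
Qed.


Lemma uu_gs w k : 0 < hh w k -> uu w (gs w) k = Num.sqrt (hh w k) *: gs w k.
Proof.
move=> h0; rewrite (gsE w k) scalerA mulfV ?scale1r //.
by rewrite gt_eqF // sqrtr_gt0.
Qed.

Lemma gs_orth w k : (forall j, (j < k)%N -> 0 < hh w j) ->
  forall i j, (i < k)%N -> (j < k)%N -> dot (gs w i) (gs w j) = (i == j)%:R.
Proof.
elim: k => [//|k IH] hpos.
have IH' := IH (fun j jk => hpos j (ltnW jk)).
suff key : forall i, (i <= k)%N -> dot (gs w k) (gs w i) = (k == i)%:R.
  move=> i j; rewrite !ltnS => ik jk.
  have [->|ik'] := eqVneq i k.
    by rewrite key.
  have [->|jk'] := eqVneq j k.
    by rewrite dotC key // eq_sym.
  by apply: IH'; rewrite ltn_neqAle ?ik' ?jk'.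
move=> i ik.
have hk := hpos k (ltnSn k).
rewrite {1}gsE dotZl.
have [->|ik'] := eqVneq i k.
  rewrite gsE dotC dotZl -/(hh w k) mulrA -expr2 exprVn sqr_sqrtr ?ltW //.
  by rewrite mulVf // gt_eqF.
have ik2 : (i < k)%N by rewrite ltn_neqAle ik' ik.
rewrite /uu dotBl dot_suml.
under eq_bigr => j _ do rewrite dotZl (IH' j i (ltn_ord j) ik2).
rewrite (bigD1 (Ordinal ik2)) //= eqxx mulr1 big1 ?addr0 ?subrr ?mulr0 //.
by move=> j /negPf hj; rewrite -(inj_eq val_inj) /= in hj; rewrite hj mulr0.
Qed.

Lemma gs_tri w k : (forall j, (j < k)%N -> 0 < hh w j) ->
  forall i j, (i < j)%N -> (j < k)%N -> dot (w i) (gs w j) = 0.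
Proof.
move=> hpos i j ij jk.
have ik : (i < k)%N := ltn_trans ij jk.
have -> : w i = uu w (gs w) i + \sum_(j' < i) dot (w i) (gs w j') *: gs w j'.
  by rewrite /uu subrK.
rewrite dotDl (@uu_gs w i (hpos i ik)) dotZl (@gs_orth w k hpos i j ik jk) (ltn_eqF ij) mulr0 add0r.
rewrite dot_suml big1 // => j' _; rewrite dotZl (@gs_orth w k hpos j' j _ jk).
  by rewrite (ltn_eqF (ltn_trans (ltn_ord j') ij)) mulr0.
exact: ltn_trans (ltn_ord j') ik.
Qed.

Lemma gs_pos (W : 'M[R]_d) (w : nat -> 'rV[R]_d) : row_free W ->
  (forall k : 'I_d, w k = row k W) -> forall k, (k < d)%N -> 0 < hh w k.
Proof.
move=> Wf wE.
have Wu : W \in unitmx by rewrite -row_free_unit.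
pose X (v : 'rV[R]_d) := v *m invmx W.
suff H : forall k, (k <= d)%N -> (forall j, (j < k)%N -> 0 < hh w j) /\
    (forall j, (j < k)%N -> forall m : 'I_d, (j < m)%N -> X (gs w j) 0 m = 0).
  by move=> k kd; apply: (H d (leqnn d)).1.
elim=> [|k IH] kd; first by split.
have [IH1 IH2] := IH (ltnW kd).
pose kk : 'I_d := Ordinal kd.
have Xu m : X (uu w (gs w) k) 0 m = ((m == kk)%:R : R) -
    \sum_(j < k) dot (w k) (gs w j) * X (gs w j) 0 m.
  rewrite /X /uu mulmxBl mulmx_suml (wE kk) rowE mulmxK // !mxE eqxx /=.
  congr (_ - _); rewrite summxE; apply: eq_bigr => j _.
  by rewrite -scalemxAl mxE.
have Xuk : X (uu w (gs w) k) 0 kk = 1.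
  rewrite Xu eqxx big1 ?subr0 // => j _; rewrite IH2 ?mulr0 //.
have hk : 0 < hh w k.
  rewrite lt_neqAle dot_ge0 andbT eq_sym; apply/eqP => /dot_eq0 u0.
  by move: Xuk; rewrite u0 /X mul0mx mxE => /eqP; rewrite eq_sym oner_eq0.
split.
  move=> j; rewrite ltnS leq_eqVlt => /orP[/eqP->//|]; exact: IH1.
move=> j; rewrite ltnS leq_eqVlt => /orP[/eqP->|jk] m jm; last exact: IH2.
rewrite gsE /X -scalemxAl mxE.
have : X (uu w (gs w) k) 0 m = 0.
  rewrite Xu big1 ?subr0.
    by rewrite -(inj_eq val_inj) /= gtn_eqF.
  move=> j' _; rewrite IH2 ?mulr0 //; exact: ltn_trans (ltn_ord j') jm.
by rewrite /X => ->; rewrite mulr0.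
Qed.

Lemma gs_an (w : R -> nat -> 'rV[R]_d) t0 N :
  (forall k m, (k < N)%N -> an (fun t => w t k 0 m) t0) ->
  (forall k, (k < N)%N -> 0 < hh (w t0) k) ->
  forall k, (k < N)%N ->
    (forall m, an (fun t => gs (w t) k 0 m) t0) /\ an (fun t => hh (w t) k) t0.
Proof.
move=> wan hpos; elim/ltn_ind => k IH kN.
have gsan j m : (j < k)%N -> an (fun t => gs (w t) j 0 m) t0.
  by move=> jk; apply: (IH j jk (ltn_trans jk kN)).1.
have uan m : an (fun t => uu (w t) (gs (w t)) k 0 m) t0.
  have -> : (fun t => uu (w t) (gs (w t)) k 0 m) = (fun t => w t k 0 m -
      \sum_(j < k) (\sum_(m' < d) w t k 0 m' * gs (w t) j 0 m') * gs (w t) j 0 m).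
    apply: funext => t; rewrite /uu !mxE summxE; congr (_ - _).
    by apply: eq_bigr => j _; rewrite mxE.
  apply: an_sub; first exact: wan.
  apply: an_sum => j; apply: an_mul; last exact: gsan.
  apply: an_sum => m'; apply: an_mul; first exact: wan.
  exact: gsan.
have han : an (fun t => hh (w t) k) t0.
  by apply: an_sum => m; apply: an_mul.
split => // m.
have -> : (fun t => gs (w t) k 0 m) =
   (fun t => (Num.sqrt (hh (w t) k))^-1 * uu (w t) (gs (w t)) k 0 m).
  by apply: funext => t; rewrite gsE mxE.
apply: an_mul => //; apply: an_inv; first exact: an_sqrt han (hpos k kN).
by rewrite gt_eqF // sqrtr_gt0 hpos.
Qed.

Lemma complete (v : nat -> 'rV[R]_d) l : \rank (\matrix_(i < l) v i) = l ->
  exists Wc : 'M[R]_d, row_free (\matrix_(k < d) (if (k < l)%N then v k else row k Wc)).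
Proof.
move=> rV.
set V := \matrix_(i < l) v i.
have ld : (l <= d)%N by rewrite -rV rank_leq_col.
set B := row_base (V^C)%MS.
have rB : \rank (V^C)%MS = (d - l)%N by rewrite mxrank_compl rV.
pose Wc : 'M[R]_d := \matrix_(k < d)
  (if (insub (k - l)%N : option 'I_(\rank (V^C)%MS)) is Some i then row i B else 0).
exists Wc.
set M := \matrix_(k < d) _.
have rowM (k : 'I_d) : row k M = if (k < l)%N then v k else row k Wc by rewrite rowK.
have sub : (V + V^C <= M)%MS.
  rewrite addsmx_sub; apply/andP; split.
    apply/row_subP => i.
    have id : (i < d)%N by apply: leq_trans (ltn_ord i) ld.
    have -> : row i V = row (Ordinal id) M by rewrite rowM /= ltn_ord rowK.
    exact: row_sub.
  have h : (row_base (V^C)%MS <= M)%MS -> (V^C <= M)%MS by rewrite eq_row_base.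
  apply: h; apply/row_subP => i.
  have id : (l + i < d)%N by rewrite -ltn_subRL -rB ltn_ord.
  have -> : row i B = row (Ordinal id) M.
    by rewrite rowM /= ltnNge leq_addr /= rowK addKn valK.
  exact: row_sub.
have := mxrankS sub; have := addsmx_compl_full V; rewrite /row_full => /eqP ->.
by move=> h; rewrite /row_free eqn_leq rank_leq_col h.
Qed.
End GS.


Lemma ptE (R : realType) n d (q : config R n d) j (jn : (j < n)%N) :
  pt q j = q (Ordinal jn).
Proof. by rewrite /pt insubT. Qed.
Arguments ptE {R n d q j}.

Theorem lemmaA5 (R : realType) (n d l : nat) (p : R -> config R n d) (delta : R) :
  0 < delta ->
  traj_analytic_on p [set t | 0 <= t < delta] ->
  affine_dim (p 0) = l ->
  nondegenerate_config (p 0) ->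
  exists eps : R, 0 < eps /\
    exists (A : R -> 'M[R]_d) (b : R -> 'rV[R]_d),
      (forall t, 0 <= t < eps -> orthogonal_mx (A t)) /\
      mx_analytic_on A [set t | 0 <= t < eps] /\
      mx_analytic_on b [set t | 0 <= t < eps] /\
      (forall t, 0 <= t < eps -> pinned l (act_iso (A t) (b t) (p t))).
Proof.
move=> d0 Hp Hl; rewrite /nondegenerate_config /first_aff_indep Hl => -[ln rk].
have n0 : (0 < n)%N by apply: leq_ltn_trans ln.
have [Wc Wf] := @complete R d (fun k => pt (p 0) k.+1 - pt (p 0) 0%N) l rk.
pose w (t : R) (k : nat) : 'rV[R]_d := if (k < l)%N then pt (p t) k.+1 - pt (p t) 0%N
  else (if (insub k : option 'I_d) is Some kk then row kk Wc else 0).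
have hpos0 : forall k, (k < d)%N -> 0 < hh (w 0) k.
  apply: (@gs_pos R d _ (w 0) Wf) => kk; rewrite rowK /w; case: ifP => // _.
  by rewrite valK.
have wan t0 : 0 <= t0 < delta -> forall k m, an (fun t => w t k 0 m) t0.
  move=> Dt0 k m; rewrite /w; case kl: (k < l)%N; last first.
    by case: insub => [kk|]; apply: an_cst.
  have k1n : (k.+1 < n)%N by apply: leq_ltn_trans ln.
  have -> : (fun t => (pt (p t) k.+1 - pt (p t) 0%N) 0 m) =
      (fun t => p t (Ordinal k1n) 0 m - p t (Ordinal n0) 0 m).
    by apply: funext => t; rewrite (ptE k1n) (ptE n0) !mxE.
  by apply: an_sub; apply: analytic_an; apply: Hp.
have D0 : 0 <= (0 : R) < delta by rewrite lexx d0.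
have gan0 := @gs_an R d w 0 d (fun k m _ => wan 0 D0 k m) hpos0.
have near0 : forall N, (N <= d)%N -> exists r : R, 0 < r /\
    forall t, `|t - 0| < r -> forall k, (k < N)%N -> 0 < hh (w t) k.
  elim=> [|N IH] Nd; first by exists 1; split.
  have [r1 [r10 H1]] := IH (ltnW Nd).
  have [r2 [r20 H2]] := an_pos (gan0 N Nd).2 (hpos0 N Nd).
  exists (Order.min r1 r2); split; first by rewrite lt_min r10 r20.
  move=> t; rewrite lt_min => /andP[t1 t2] k; rewrite ltnS leq_eqVlt => /orP[/eqP->|kN].
    exact: H2.
  exact: H1.
have [r [r0 Hr]] := near0 d (leqnn d).
pose eps := Order.min delta r.
have eps0 : 0 < eps by rewrite lt_min d0 r0.
have Dt t : 0 <= t < eps -> (0 <= t < delta) /\ forall k, (k < d)%N -> 0 < hh (w t) k.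
  move=> /andP[t0 te]; move: te; rewrite lt_min => /andP[td tr]; split.
    by rewrite t0 td.
  by apply: Hr; rewrite subr0 ger0_norm.
pose A (t : R) : 'M[R]_d := \matrix_(k < d, m < d) gs (w t) k 0 m.
pose b (t : R) : 'rV[R]_d := - (pt (p t) 0%N *m (A t)^T).
have o0 := ptE (q := p _) n0.
exists eps; split => //; exists A, b; split; [|split; [|split]].
- move=> t /Dt [_ hp]; rewrite /orthogonal_mx; apply: mulmx1C.
  apply/matrixP => i j; rewrite !mxE.
  have := @gs_orth R d (w t) d hp i j (ltn_ord i) (ltn_ord j).
  rewrite /dot => <-; apply: eq_bigr => m _; rewrite !mxE //.
- move=> t0 /Dt [D hp] i j; apply: an_analytic.
  have -> : (fun t => A t i j) = (fun t => gs (w t) i 0 j) by apply: funext => t; rewrite mxE.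
  exact: ((@gs_an R d w t0 d (fun k m _ => wan t0 D k m) hp) i (ltn_ord i)).1.
- move=> t0 /Dt [D hp] i j; apply: an_analytic.
  have -> : (fun t => b t i j) =
      (fun t => - \sum_(m < d) p t (Ordinal n0) 0 m * gs (w t) j 0 m).
    apply: funext => t; rewrite !mxE (ptE n0); congr (- _); apply: eq_bigr => m _.
    by rewrite !mxE (ord1 i).
  apply: an_opp; apply: an_sum => m; apply: an_mul.
    by apply: analytic_an; apply: Hp.
  exact: ((@gs_an R d w t0 d (fun k m _ => wan t0 D k m) hp) j (ltn_ord j)).1.
- move=> t /Dt [_ hp] i j il ij.
  have -> : act_iso (A t) (b t) (p t) i 0 j = dot (p t i - pt (p t) 0%N) (gs (w t) j).
    rewrite /act_iso dotBl /dot !mxE; congr (_ + _).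
      by apply: eq_bigr => m _; rewrite !mxE.
    by congr (- _); apply: eq_bigr => m _; rewrite !mxE.
  case: i il ij => [[|i'] iP] /= il ij.
    have -> : pt (p t) 0%N = p t (Ordinal iP) by rewrite (ptE iP).
    by rewrite subrr /dot big1 // => m _; rewrite mxE mul0r.
  have -> : p t (Ordinal iP) - pt (p t) 0%N = w t i'.
    by rewrite /w il (ptE iP).
  exact: (@gs_tri R d (w t) d hp i' j ij (ltn_ord j)).
Qed.
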